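(* Let $\mathbf x:I\subset\mathbb R_*\to\mathbb R_*^3$ be a multiplicative naturally parametrized curve with multiplicative curvature $\kappa>0_*$ and torsion $\tau$ on $I$. Then $\mathbf x$ is a multiplicative slant helix if and only if the function $$\sigma(s)=\Big[\kappa^{2_*}(s)/_*\big(\kappa^{2_*}(s)+_*\tau^{2_*}(s)\big)^{\frac32_*}\Big]\cdot_*\big(\tau(s)/_*\kappa(s)\big)^*$$ is constant on $I$. (Explicitly, $\log\sigma=\dfrac{(\log\kappa)^2}{((\log\kappa)^2+(\log\tau)^2)^{3/2}}\log\big((\tau/_*\kappa)^*\big)$.)
   Context: Multiplicative arithmetic: $\mathbb R_*=(0,\infty)$ with $a+_*b=ab$, $a-_*b=a/b$, $a\cdot_*b=e^{\log a\log b}$, $a/_*b=e^{\log a/\log b}$ ($b\neq1$); $0_*=1$, $1_*=e$, $-_*a=1/a$; $a>0_*$ means $a>1$; powers $a^{r_*}=e^{(\log a)^r}$. On $\mathbb R_*^3$, with $\log\mathbf u=(\log u_i)_i$: $\mathbf u+_*\mathbf v=(u_iv_i)_i$, $k\cdot_*\mathbf u=(e^{\log k\log u_i})_i$, $\langle\mathbf u,\mathbf v\rangle_*=e^{\langle\log\mathbf u,\log\mathbf v\rangle}$, $\|\mathbf u\|_*=e^{\|\log\mathbf u\|}$, $\mathbf u\times_*\mathbf v=\exp(\log\mathbf u\times\log\mathbf v)$. Multiplicative derivative: $g^*(s)=e^{s g'(s)/g(s)}$, componentwise, iterated. $\mathbf x$ is naturally parametrized if $\|\mathbf x^*\|_*=1_*$.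 Multiplicative Frenet apparatus: $\mathbf t=\mathbf x^*$, $\kappa=\|\mathbf x^{**}\|_*$, $\mathbf n=\mathbf x^{**}/_*\kappa$, $\mathbf b=\mathbf t\times_*\mathbf n$, $\tau=\langle\mathbf n^*,\mathbf b\rangle_*$; Frenet formulas $\mathbf t^*=\kappa\cdot_*\mathbf n$, $\mathbf n^*=-_*\kappa\cdot_*\mathbf t+_*\tau\cdot_*\mathbf b$, $\mathbf b^*=-_*\tau\cdot_*\mathbf n$. A curve $\mathbf x$ with $\kappa\ne0_*$ is a multiplicative slant helix if there is a constant multiplicative unit vector $\mathbf v$ ($\|\mathbf v\|_*=1_*$) such that the multiplicative angle between $\mathbf n(s)$ and $\mathbf v$ is constant, i.e. $\langle\mathbf n(s),\mathbf v\rangle_*$ is constant on $I$. *)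

(* Defs.v *)
From Stdlib Require Import Reals Lra.
From Coquelicot Require Import Coquelicot.
Open Scope R_scope.

Definition madd (a b : R) : R := a * b.
Definition mmul (a b : R) : R := exp (ln a * ln b).
Definition mdivs (a b : R) : R := exp (ln a / ln b).       (* a /_* b, b <> 1 *)
Definition msq (a : R) : R := exp ((ln a) ^ 2).
(* a^{r_*} = e^{(log a)^r}, used here only with log a > 0 *)
Definition mpowR (a r : R) : R := exp (Rpower (ln a) r).

Definition mder (g : R -> R) (s : R) : R := exp (s * Derive g s / g s).

Definition vec3 : Type := (R * R * R)%type.
Definition c1 (u : vec3) : R := fst (fst u).
Definition c2 (u : vec3) : R := snd (fst u).
Definition c3 (u : vec3) : R := snd u.
Definition mk3 (a b c : R) : vec3 := (a, b, c).

Definition vpos (u : vec3) : Prop := 0 < c1 u /\ 0 < c2 u /\ 0 < c3 u.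

Definition minner (u v : vec3) : R :=
  exp (ln (c1 u) * ln (c1 v) + ln (c2 u) * ln (c2 v) + ln (c3 u) * ln (c3 v)).
Definition mnorm (u : vec3) : R :=
  exp (sqrt (ln (c1 u) ^ 2 + ln (c2 u) ^ 2 + ln (c3 u) ^ 2)).
Definition mvdiv (u : vec3) (k : R) : vec3 :=
  mk3 (mdivs (c1 u) k) (mdivs (c2 u) k) (mdivs (c3 u) k).
Definition mcross (u v : vec3) : vec3 :=
  let a1 := ln (c1 u) in let a2 := ln (c2 u) in let a3 := ln (c3 u) in
  let b1 := ln (c1 v) in let b2 := ln (c2 v) in let b3 := ln (c3 v) in
  mk3 (exp (a2 * b3 - a3 * b2)) (exp (a3 * b1 - a1 * b3)) (exp (a1 * b2 - a2 * b1)).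

Definition vmder (x : R -> vec3) (s : R) : vec3 :=
  mk3 (mder (fun u => c1 (x u)) s) (mder (fun u => c2 (x u)) s)
      (mder (fun u => c3 (x u)) s).

Definition mtan (x : R -> vec3) : R -> vec3 := vmder x.
Definition mcurv (x : R -> vec3) (s : R) : R := mnorm (vmder (vmder x) s).
Definition mnormal (x : R -> vec3) (s : R) : vec3 :=
  mvdiv (vmder (vmder x) s) (mcurv x s).
Definition mbinormal (x : R -> vec3) (s : R) : vec3 :=
  mcross (mtan x s) (mnormal x s).
Definition mtors (x : R -> vec3) (s : R) : R :=
  minner (vmder (mnormal x) s) (mbinormal x s).

Definition open_interval_pos (I : R -> Prop) : Prop :=
  (forall s, I s -> 0 < s) /\
  (forall a b c, I a -> I c -> a <= b <= c -> I b) /\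
  (forall s, I s -> exists e, 0 < e /\ forall u, Rabs (u - s) < e -> I u) /\
  (exists s, I s).

Definition smooth_curve_on (I : R -> Prop) (x : R -> vec3) : Prop :=
  forall s, I s -> vpos (x s) /\
    forall k, ex_derive_n (fun u => c1 (x u)) k s /\
              ex_derive_n (fun u => c2 (x u)) k s /\
              ex_derive_n (fun u => c3 (x u)) k s.

(* naturally parametrized: ||x^*||_* = 1_* = e *)
Definition mnatural (I : R -> Prop) (x : R -> vec3) : Prop :=
  forall s, I s -> mnorm (vmder x s) = exp 1.

Definition mslant_helix (I : R -> Prop) (x : R -> vec3) : Prop :=
  exists v : vec3, vpos v /\ mnorm v = exp 1 /\
    exists c : R, forall s, I s -> minner (mnormal x s) v = c.

Definition msigma (x : R -> vec3) (s : R) : R :=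
  let k := mcurv x s in let t := mtors x s in
  mmul (mdivs (msq k) (mpowR (madd (msq k) (msq t)) (3/2)))
       (mder (fun u => mdivs (mtors x u) (mcurv x u)) s).

(* Main.v *)
Require Import Defs.
From Stdlib Require Import Reals Lra Lia.
From Coquelicot Require Import Coquelicot.
Open Scope R_scope.

Definition openI (I : R -> Prop) := forall s, I s -> locally s I.

Lemma openI_of I : open_interval_pos I -> openI I.
Proof.
  intros [_ [_ [H _]]] s Hs. destruct (H s Hs) as [e [He He']].
  exists (mkposreal e He). intros y Hy. apply He'. exact Hy.
Qed.

Definition CK (I : R -> Prop) (k : nat) (h : R -> R) :=
  forall j, (j <= k)%nat -> forall s, I s -> ex_derive (Derive_n h j) s.

Lemma Derive_n_D h j x : Derive_n (Derive h) j x = Derive_n h (S j) x.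
Proof.
  induction j in x |- *. reflexivity.
  simpl. apply Derive_ext. intro t. apply IHj.
Qed.

Lemma CK_ex I k h s : CK I k h -> I s -> ex_derive h s.
Proof. intros H Hs. exact (H 0%nat (Nat.le_0_l _) s Hs). Qed.

Lemma CK_S I k h : CK I (S k) h -> CK I k (Derive h).
Proof.
  intros H j Hj s Hs. apply (ex_derive_ext (Derive_n h (S j))).
  intro t. symmetry. apply Derive_n_D. apply H; [lia|exact Hs].
Qed.

Lemma CK_mono I k h : CK I (S k) h -> CK I k h.
Proof. intros H j Hj s Hs. apply H; [lia|exact Hs]. Qed.

Lemma CK_transfer I k h g : openI I -> (forall s, I s -> h s = g s) -> CK I k g -> CK I k h.
Proof.
  intros HI Heq H j Hj s Hs.
  apply (ex_derive_ext_loc (Derive_n g j)).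
  - apply (filter_imp I). 2: apply HI, Hs.
    intros t Ht. symmetry. apply Derive_n_ext_loc.
    apply (filter_imp I). 2: apply HI, Ht. intros; auto.
  - apply H; auto.
Qed.

Lemma CK_step I k h h2 : openI I ->
  (forall s, I s -> ex_derive h s) -> (forall s, I s -> Derive h s = h2 s) ->
  CK I k h2 -> CK I (S k) h.
Proof.
  intros HI Hex Heq H j Hj s Hs. destruct j as [|j]. apply Hex, Hs.
  apply (ex_derive_ext (Derive_n (Derive h) j)). intro t. apply Derive_n_D.
  assert (CK I k (Derive h)) by (apply (CK_transfer _ _ _ h2); auto).
  apply H0; [lia|exact Hs].
Qed.

Lemma CK_0 I h : (forall s, I s -> ex_derive h s) -> CK I 0 h.
Proof. intros H j Hj s Hs. assert (j = 0%nat) by lia. subst. apply H, Hs. Qed.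

Lemma CK_const I k c : openI I -> CK I k (fun _ => c).
Proof.
  intros HI. revert c. induction k; intro c.
  - apply CK_0. intros; apply ex_derive_const.
  - apply (CK_step _ _ _ (fun _ => 0)); auto.
    intros; apply ex_derive_const. intros; apply Derive_const.
Qed.

Lemma CK_id I k : openI I -> CK I k (fun t => t).
Proof.
  intros HI. destruct k.
  - apply CK_0. intros; apply ex_derive_id.
  - apply (CK_step _ _ _ (fun _ => 1)); auto.
    intros; apply ex_derive_id. intros; apply Derive_id. apply CK_const; auto.
Qed.

Ltac cke := match goal with
  | H : CK ?I _ ?f, Hs : ?I ?s |- ex_derive ?f ?s => exact (CK_ex _ _ _ _ H Hs)
  | H : CK ?I _ ?f, Hs : ?I ?s |- ex_derive (fun t => ?f t) ?s => exact (CK_ex _ _ _ _ H Hs)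
  end.

Lemma CK_plus I k f g : openI I -> CK I k f -> CK I k g -> CK I k (fun t => f t + g t).
Proof.
  intros HI. revert f g. induction k; intros f g Hf Hg.
  - apply CK_0. intros s Hs. apply (ex_derive_plus f g); cke.
  - apply (CK_step _ _ _ (fun t => Derive f t + Derive g t)); auto.
    + intros s Hs. apply (ex_derive_plus f g); cke.
    + intros s Hs. apply Derive_plus; cke.
    + apply IHk; apply CK_S; assumption.
Qed.

Lemma CK_mult I k f g : openI I -> CK I k f -> CK I k g -> CK I k (fun t => f t * g t).
Proof.
  intros HI. revert f g. induction k; intros f g Hf Hg.
  - apply CK_0. intros s Hs. apply (ex_derive_mult f g); cke.
  - apply (CK_step _ _ _ (fun t => Derive f t * g t + f t * Derive g t)); [exact HI| | |].
    + intros s Hs. apply (ex_derive_mult f g); cke.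
    + intros s Hs. apply Derive_mult; cke.
    + apply CK_plus; [exact HI| |].
      * apply IHk. apply CK_S; assumption. apply CK_mono; assumption.
      * apply IHk. apply CK_mono; assumption. apply CK_S; assumption.
Qed.

Lemma CK_opp I k f : openI I -> CK I k f -> CK I k (fun t => - f t).
Proof.
  intros HI Hf. apply (CK_transfer _ _ _ (fun t => (-1) * f t)); [exact HI| |].
  intros; ring. apply CK_mult; [exact HI| |exact Hf]. apply CK_const; exact HI.
Qed.

Lemma CK_minus I k f g : openI I -> CK I k f -> CK I k g -> CK I k (fun t => f t - g t).
Proof.
  intros HI Hf Hg. apply (CK_transfer _ _ _ (fun t => f t + - g t)); [exact HI| |].
  intros; ring. apply CK_plus; [exact HI|exact Hf|]. apply CK_opp; assumption.
Qed.

Lemma CK_inv I k f : openI I -> (forall s, I s -> f s <> 0) -> CK I k f -> CK I k (fun t => / f t).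
Proof.
  intros HI Hnz. revert f Hnz. induction k; intros f Hnz Hf.
  - apply CK_0. intros s Hs. apply ex_derive_inv. cke. apply Hnz, Hs.
  - apply (CK_step _ _ _ (fun t => - Derive f t * ((/ f t) * (/ f t)))); [exact HI| | |].
    + intros s Hs. apply ex_derive_inv. cke. apply Hnz, Hs.
    + intros s Hs. rewrite Derive_inv. field. apply Hnz, Hs. cke. apply Hnz, Hs.
    + apply CK_mult; [exact HI| |]. apply CK_opp; [exact HI|]. apply CK_S; assumption.
      apply CK_mult; [exact HI| |]; apply IHk; try assumption; apply CK_mono; assumption.
Qed.

Lemma ex_derive_expc f s : ex_derive f s -> ex_derive (fun t => exp (f t)) s.
Proof. intro H. apply (ex_derive_comp exp f). exists (exp (f s)). apply is_derive_exp. exact H. Qed.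

Lemma Derive_expc f s : ex_derive f s -> Derive (fun t => exp (f t)) s = Derive f s * exp (f s).
Proof. intro H. rewrite Derive_comp. f_equal. apply is_derive_unique, is_derive_exp.
  exists (exp (f s)). apply is_derive_exp. exact H. Qed.

Lemma CK_exp I k f : openI I -> CK I k f -> CK I k (fun t => exp (f t)).
Proof.
  intros HI. revert f. induction k; intros f Hf.
  - apply CK_0. intros s Hs. apply ex_derive_expc. cke.
  - apply (CK_step _ _ _ (fun t => Derive f t * exp (f t))); [exact HI| | |].
    + intros s Hs. apply ex_derive_expc. cke.
    + intros s Hs. apply Derive_expc. cke.
    + apply CK_mult; [exact HI| |]. apply CK_S; assumption. apply IHk; apply CK_mono; assumption.
Qed.

Lemma ex_derive_sqrtc f s : ex_derive f s -> 0 < f s -> ex_derive (fun t => sqrt (f t)) s.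
Proof. intros [d H] Hp. eexists. apply is_derive_sqrt; eauto. Qed.

Lemma Derive_sqrtc f s : ex_derive f s -> 0 < f s -> Derive (fun t => sqrt (f t)) s = Derive f s / (2 * sqrt (f s)).
Proof. intros H Hp. apply is_derive_unique. apply is_derive_sqrt; auto. apply Derive_correct, H. Qed.

Lemma CK_sqrt I k f : openI I -> (forall s, I s -> 0 < f s) -> CK I k f -> CK I k (fun t => sqrt (f t)).
Proof.
  intros HI Hp. revert f Hp. induction k; intros f Hp Hf.
  - apply CK_0. intros s Hs. apply ex_derive_sqrtc. cke. apply Hp, Hs.
  - apply (CK_step _ _ _ (fun t => Derive f t * (/2 * / sqrt (f t)))); [exact HI| | |].
    + intros s Hs. apply ex_derive_sqrtc. cke. apply Hp, Hs.
    + intros s Hs. rewrite Derive_sqrtc. field. apply Rgt_not_eq, sqrt_lt_R0, Hp, Hs. cke. apply Hp, Hs.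
    + apply CK_mult; [exact HI| |]. apply CK_S; assumption.
      apply CK_mult; [exact HI| |]. apply CK_const; exact HI.
      apply CK_inv; [exact HI| |]. intros s Hs. apply Rgt_not_eq, sqrt_lt_R0, Hp, Hs.
      apply IHk; [exact Hp|]. apply CK_mono; assumption.
Qed.

Definition Sm (I : R -> Prop) (h : R -> R) := forall k, CK I k h.
Notation c1 := Defs.c1.
Notation c2 := Defs.c2.
Notation c3 := Defs.c3.

Ltac etared := repeat match goal with |- context [fun y => ?f y] => change (fun y => f y) with f end.

Definition P3 (p : vec3 -> R) := p = c1 \/ p = c2 \/ p = c3.
Definition lg (F : R -> vec3) (p : vec3 -> R) (u : R) := ln (p (F u)).
Definition Tl x p := lg (vmder x) p.
Definition Al x p := lg (vmder (vmder x)) p.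
Definition Kf x u := ln (mcurv x u).
Definition Nl x p := lg (mnormal x) p.
Definition Dl x p := lg (vmder (mnormal x)) p.
Definition Bl x p := lg (mbinormal x) p.
Definition Tau x u := ln (mtors x u).

Lemma E_T x p u : P3 p -> Tl x p u = u * Derive (fun v => p (x v)) u / p (x u).
Proof. intros [->|[->| ->]]; unfold Tl, lg, vmder, mder, mk3; simpl; apply ln_exp. Qed.

Lemma E_K x u : Kf x u = sqrt (Al x c1 u ^ 2 + Al x c2 u ^ 2 + Al x c3 u ^ 2).
Proof. unfold Kf, mcurv, mnorm. rewrite ln_exp. reflexivity. Qed.

Lemma E_N x p u : P3 p -> Nl x p u = Al x p u / Kf x u.
Proof. intros [->|[->| ->]]; unfold Nl, Al, Kf, lg, mnormal, mvdiv, mdivs, mk3, Defs.c1, Defs.c2, Defs.c3; simpl; rewrite ln_exp; reflexivity. Qed.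

Lemma E_B1 x u : Bl x c1 u = Tl x c2 u * Nl x c3 u - Tl x c3 u * Nl x c2 u.
Proof. unfold Bl, Tl, Nl, lg, mbinormal, mtan, mcross, mk3, Defs.c1, Defs.c2, Defs.c3; simpl; rewrite ln_exp; reflexivity. Qed.
Lemma E_B2 x u : Bl x c2 u = Tl x c3 u * Nl x c1 u - Tl x c1 u * Nl x c3 u.
Proof. unfold Bl, Tl, Nl, lg, mbinormal, mtan, mcross, mk3, Defs.c1, Defs.c2, Defs.c3; simpl; rewrite ln_exp; reflexivity. Qed.
Lemma E_B3 x u : Bl x c3 u = Tl x c1 u * Nl x c2 u - Tl x c2 u * Nl x c1 u.
Proof. unfold Bl, Tl, Nl, lg, mbinormal, mtan, mcross, mk3, Defs.c1, Defs.c2, Defs.c3; simpl; rewrite ln_exp; reflexivity. Qed.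

Lemma E_Tau x u : Tau x u = Dl x c1 u * Bl x c1 u + Dl x c2 u * Bl x c2 u + Dl x c3 u * Bl x c3 u.
Proof. unfold Tau, mtors, minner. rewrite ln_exp. reflexivity. Qed.

Lemma pos_vmder F p u : P3 p -> 0 < p (vmder F u).
Proof. intros [->|[->| ->]]; apply exp_pos. Qed.
Lemma pos_mnormal x p u : P3 p -> 0 < p (mnormal x u).
Proof. intros [->|[->| ->]]; apply exp_pos. Qed.

Lemma lg_vmder F p s : P3 p -> (forall v, 0 < p (F v)) -> ex_derive (lg F p) s ->
  lg (vmder F) p s = s * Derive (lg F p) s.
Proof.
  intros HP Hpos Hex.
  assert (Hm : lg (vmder F) p s = s * Derive (fun v => p (F v)) s / p (F s)).
  { destruct HP as [->|[->| ->]]; unfold lg, vmder, mder, mk3; simpl; apply ln_exp. }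
  rewrite Hm.
  rewrite (Derive_ext (fun v => p (F v)) (fun v => exp (lg F p v))).
  2: { intro t. unfold lg. rewrite exp_ln; auto. }
  rewrite (Derive_comp exp (lg F p)).
  rewrite (is_derive_unique exp _ _ (is_derive_exp _)). unfold lg at 2. rewrite exp_ln; auto.
  field. apply Rgt_not_eq, Hpos.
  exists (exp (lg F p s)). apply is_derive_exp. exact Hex.
Qed.

Definition Hyp I x := open_interval_pos I /\ smooth_curve_on I x /\ mnatural I x /\ (forall s, I s -> 1 < mcurv x s).



Lemma Sm_ex I f s : Sm I f -> I s -> ex_derive f s.
Proof. intros H Hs. exact (CK_ex _ _ _ _ (H 0%nat) Hs). Qed.
Lemma Sm_D I f : Sm I f -> Sm I (Derive f).
Proof. intros H k. apply CK_S, H. Qed.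
Lemma Sm_transfer I h g : openI I -> (forall s, I s -> h s = g s) -> Sm I g -> Sm I h.
Proof. intros HI He H k. apply (CK_transfer _ _ _ g); auto. Qed.
Lemma Sm_const I c : openI I -> Sm I (fun _ => c).
Proof. intros HI k. apply CK_const, HI. Qed.
Lemma Sm_id I : openI I -> Sm I (fun t => t).
Proof. intros HI k. apply CK_id, HI. Qed.
Lemma Sm_plus I f g : openI I -> Sm I f -> Sm I g -> Sm I (fun t => f t + g t).
Proof. intros HI Hf Hg k. apply CK_plus; auto. Qed.
Lemma Sm_minus I f g : openI I -> Sm I f -> Sm I g -> Sm I (fun t => f t - g t).
Proof. intros HI Hf Hg k. apply CK_minus; auto. Qed.
Lemma Sm_mult I f g : openI I -> Sm I f -> Sm I g -> Sm I (fun t => f t * g t).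
Proof. intros HI Hf Hg k. apply CK_mult; auto. Qed.
Lemma Sm_inv I f : openI I -> (forall s, I s -> f s <> 0) -> Sm I f -> Sm I (fun t => / f t).
Proof. intros HI Hn Hf k. apply CK_inv; auto. Qed.
Lemma Sm_sqrt I f : openI I -> (forall s, I s -> 0 < f s) -> Sm I f -> Sm I (fun t => sqrt (f t)).
Proof. intros HI Hn Hf k. apply CK_sqrt; auto. Qed.
Lemma Sm_sq I f : openI I -> Sm I f -> Sm I (fun t => f t ^ 2).
Proof. intros HI Hf. apply (Sm_transfer _ _ (fun t => f t * f t)); auto. intros; ring. apply Sm_mult; auto. Qed.
Lemma Sm_Dop I f : openI I -> Sm I f -> Sm I (fun t => t * Derive f t).
Proof. intros HI Hf. apply Sm_mult; auto. apply Sm_id; auto. apply Sm_D; auto. Qed.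

Lemma Hyp_open I x : Hyp I x -> openI I.
Proof. intros [H _]. apply openI_of, H. Qed.

Lemma Sm_x I x p : Hyp I x -> P3 p -> Sm I (fun v => p (x v)).
Proof.
  intros [_ [Hs _]] HP k j Hj s HIs. destruct (Hs s HIs) as [_ Hk].
  destruct (Hk (S j)) as [H1 [H2 H3]].
  destruct HP as [->|[->| ->]]; assumption.
Qed.

Lemma pos_x I x p s : Hyp I x -> P3 p -> I s -> 0 < p (x s).
Proof.
  intros [_ [Hs _]] HP HIs. destruct (Hs s HIs) as [[? [? ?]] _].
  destruct HP as [->|[->| ->]]; assumption.
Qed.

Lemma Sm_Tl I x p : Hyp I x -> P3 p -> Sm I (Tl x p).
Proof.
  intros H HP. pose proof (Hyp_open _ _ H) as HI.
  apply (Sm_transfer _ _ (fun u => (u * Derive (fun v => p (x v)) u) * / p (x u))); auto.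
  intros s Hs. rewrite E_T; auto.
  apply Sm_mult; auto. apply Sm_Dop; auto. apply Sm_x; auto.
  apply Sm_inv; auto. intros s Hs. apply Rgt_not_eq, (pos_x I); auto. apply Sm_x; auto.
Qed.

Lemma R_Al I x p s : Hyp I x -> P3 p -> I s -> Al x p s = s * Derive (Tl x p) s.
Proof.
  intros H HP Hs. unfold Al, Tl. apply lg_vmder; auto.
  intro; apply pos_vmder; auto. apply (Sm_ex I). apply Sm_Tl; auto. auto.
Qed.

Lemma Sm_Al I x p : Hyp I x -> P3 p -> Sm I (Al x p).
Proof.
  intros H HP. pose proof (Hyp_open _ _ H) as HI.
  apply (Sm_transfer _ _ (fun u => u * Derive (Tl x p) u)); auto.
  intros s Hs. apply (R_Al I); auto. apply Sm_Dop; auto. apply Sm_Tl; auto.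
Qed.

Lemma K_pos I x s : Hyp I x -> I s -> 0 < Kf x s.
Proof.
  intros [_ [_ [_ H]]] Hs. unfold Kf. rewrite <- ln_1. apply ln_increasing; [lra| apply H, Hs].
Qed.

Lemma sumA_pos I x s : Hyp I x -> I s -> 0 < Al x c1 s ^ 2 + Al x c2 s ^ 2 + Al x c3 s ^ 2.
Proof.
  intros H Hs. pose proof (K_pos _ _ _ H Hs) as Hk. rewrite E_K in Hk.
  destruct (Rlt_or_le 0 (Al x c1 s ^ 2 + Al x c2 s ^ 2 + Al x c3 s ^ 2)) as [h|h]; auto.
  rewrite sqrt_neg_0 in Hk; lra.
Qed.

Lemma P31 : P3 c1. Proof. left; reflexivity. Qed.
Lemma P32 : P3 c2. Proof. right; left; reflexivity. Qed.
Lemma P33 : P3 c3. Proof. right; right; reflexivity. Qed.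
#[local] Hint Resolve P31 P32 P33 : core.

Lemma Sm_K I x : Hyp I x -> Sm I (Kf x).
Proof.
  intros H. pose proof (Hyp_open _ _ H) as HI.
  apply (Sm_transfer _ _ (fun u => sqrt (Al x c1 u ^ 2 + Al x c2 u ^ 2 + Al x c3 u ^ 2))); auto.
  intros; apply E_K. apply Sm_sqrt; auto. intros; apply (sumA_pos I); auto.
  apply Sm_plus; auto. apply Sm_plus; auto. all: apply Sm_sq; auto; apply Sm_Al; auto.
Qed.

Lemma Sm_Nl I x p : Hyp I x -> P3 p -> Sm I (Nl x p).
Proof.
  intros H HP. pose proof (Hyp_open _ _ H) as HI.
  apply (Sm_transfer _ _ (fun u => Al x p u * / Kf x u)); auto.
  intros; rewrite E_N; auto. apply Sm_mult; auto. apply Sm_Al; auto.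
  apply Sm_inv; auto. intros; apply Rgt_not_eq, (K_pos I); auto. apply Sm_K; auto.
Qed.

Lemma R_Dl I x p s : Hyp I x -> P3 p -> I s -> Dl x p s = s * Derive (Nl x p) s.
Proof.
  intros H HP Hs. unfold Dl, Nl. apply lg_vmder; auto.
  intro; apply pos_mnormal; auto. apply (Sm_ex I). apply Sm_Nl; auto. auto.
Qed.

Lemma Sm_Dl I x p : Hyp I x -> P3 p -> Sm I (Dl x p).
Proof.
  intros H HP. pose proof (Hyp_open _ _ H) as HI.
  apply (Sm_transfer _ _ (fun u => u * Derive (Nl x p) u)); auto.
  intros s Hs. apply (R_Dl I); auto. apply Sm_Dop; auto. apply Sm_Nl; auto.
Qed.

Ltac p3 := first [apply P31|apply P32|apply P33].
Ltac smb0 HI H := repeat lazymatch goal with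
 | |- Sm _ (fun t => _ - _) => apply Sm_minus; [exact HI| |]
 | |- Sm _ (fun t => _ + _) => apply Sm_plus; [exact HI| |]
 | |- Sm _ (fun t => _ * _) => apply Sm_mult; [exact HI| |]
 | |- Sm _ (fun t => Tl _ ?p t) => apply (Sm_Tl _ _ p H); p3
 | |- Sm _ (Tl _ ?p) => apply (Sm_Tl _ _ p H); p3
 | |- Sm _ (fun t => Nl _ ?p t) => apply (Sm_Nl _ _ p H); p3
 | |- Sm _ (Nl _ ?p) => apply (Sm_Nl _ _ p H); p3
 | |- Sm _ (fun t => Dl _ ?p t) => apply (Sm_Dl _ _ p H); p3
 | |- Sm _ (Dl _ ?p) => apply (Sm_Dl _ _ p H); p3
 end.

Lemma Sm_Bl I x p : Hyp I x -> P3 p -> Sm I (Bl x p).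
Proof.
  intros H HP. pose proof (Hyp_open _ _ H) as HI.
  destruct HP as [->|[->| ->]].
  - apply (Sm_transfer _ _ (fun u => Tl x c2 u * Nl x c3 u - Tl x c3 u * Nl x c2 u)). exact HI.
    intros; apply E_B1. smb0 HI H.
  - apply (Sm_transfer _ _ (fun u => Tl x c3 u * Nl x c1 u - Tl x c1 u * Nl x c3 u)). exact HI.
    intros; apply E_B2. smb0 HI H.
  - apply (Sm_transfer _ _ (fun u => Tl x c1 u * Nl x c2 u - Tl x c2 u * Nl x c1 u)). exact HI.
    intros; apply E_B3. smb0 HI H.
Qed.

Lemma Sm_Tau I x : Hyp I x -> Sm I (Tau x).
Proof.
  intros H. pose proof (Hyp_open _ _ H) as HI.
  apply (Sm_transfer _ _ (fun u => Dl x c1 u * Bl x c1 u + Dl x c2 u * Bl x c2 u + Dl x c3 u * Bl x c3 u)). exact HI.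
  intros; apply E_Tau. smb0 HI H; apply (Sm_Bl _ _ _ H); p3.
Qed.

Ltac smb HI H := repeat lazymatch goal with
 | |- Sm _ (fun t => _ - _) => apply Sm_minus; [exact HI| |]
 | |- Sm _ (fun t => _ + _) => apply Sm_plus; [exact HI| |]
 | |- Sm _ (fun t => _ * _) => apply Sm_mult; [exact HI| |]
 | |- Sm _ (fun t => Tl _ ?p t) => apply (Sm_Tl _ _ p H); p3
 | |- Sm _ (Tl _ ?p) => apply (Sm_Tl _ _ p H); p3
 | |- Sm _ (fun t => Nl _ ?p t) => apply (Sm_Nl _ _ p H); p3
 | |- Sm _ (Nl _ ?p) => apply (Sm_Nl _ _ p H); p3
 | |- Sm _ (fun t => Dl _ ?p t) => apply (Sm_Dl _ _ p H); p3
 | |- Sm _ (Dl _ ?p) => apply (Sm_Dl _ _ p H); p3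
 | |- Sm _ (fun t => Bl _ ?p t) => apply (Sm_Bl _ _ p H); p3
 | |- Sm _ (Bl _ ?p) => apply (Sm_Bl _ _ p H); p3
 | |- Sm _ (fun t => Kf _ t) => apply (Sm_K _ _ H)
 | |- Sm _ (Kf _) => apply (Sm_K _ _ H)
 | |- Sm _ (fun t => Tau _ t) => apply (Sm_Tau _ _ H)
 | |- Sm _ (Tau _) => apply (Sm_Tau _ _ H)
 end.

Lemma decomp (T1 T2 T3 N1 N2 N3 w1 w2 w3 : R) :
  T1*T1+T2*T2+T3*T3 = 1 -> N1*N1+N2*N2+N3*N3 = 1 -> T1*N1+T2*N2+T3*N3 = 0 ->
  let B1 := T2*N3 - T3*N2 in let B2 := T3*N1 - T1*N3 in let B3 := T1*N2 - T2*N1 in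
  let wT := w1*T1+w2*T2+w3*T3 in let wN := w1*N1+w2*N2+w3*N3 in let wB := w1*B1+w2*B2+w3*B3 in
  w1 = wT*T1 + wN*N1 + wB*B1 /\ w2 = wT*T2 + wN*N2 + wB*B2 /\ w3 = wT*T3 + wN*N3 + wB*B3.
Proof.
  intros HT HN HTN B1 B2 B3 wT wN wB.
  set (TT := T1*T1+T2*T2+T3*T3) in *. set (NN := N1*N1+N2*N2+N3*N3) in *. set (TN := T1*N1+T2*N2+T3*N3) in *.
  assert (HB : B1*B1+B2*B2+B3*B3 = TT*NN - TN*TN) by (unfold B1,B2,B3,TT,NN,TN; ring).
  assert (E1 : w1*(B1*B1+B2*B2+B3*B3) - B1*wB = wN*(N1*TT - T1*TN) - wT*(N1*TN - T1*NN)) by (unfold wB,wN,wT,B1,B2,B3,TT,NN,TN; ring).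
  assert (E2 : w2*(B1*B1+B2*B2+B3*B3) - B2*wB = wN*(N2*TT - T2*TN) - wT*(N2*TN - T2*NN)) by (unfold wB,wN,wT,B1,B2,B3,TT,NN,TN; ring).
  assert (E3 : w3*(B1*B1+B2*B2+B3*B3) - B3*wB = wN*(N3*TT - T3*TN) - wT*(N3*TN - T3*NN)) by (unfold wB,wN,wT,B1,B2,B3,TT,NN,TN; ring).
  rewrite HB, HT, HN, HTN in *. split; [|split]; nra.
Qed.

Lemma locconst_D I f c s : openI I -> (forall u, I u -> f u = c) -> I s -> Derive f s = 0.
Proof.
  intros HI Hc Hs. rewrite (Derive_ext_loc f (fun _ => c)). apply Derive_const.
  apply (filter_imp I). intros; auto. apply HI, Hs.
Qed.

Lemma deriv_zero I f c s l : openI I -> (forall u, I u -> f u = c) -> I s -> is_derive f s l -> l = 0.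
Proof. intros HI Hc Hs Hd. rewrite <- (is_derive_unique _ _ _ Hd). apply (locconst_D I _ c); auto. Qed.

Ltac exd HI H Hs := repeat split; try (eapply Sm_ex; [smb HI H | exact Hs]).




Lemma F0 I x s : Hyp I x -> I s -> Tl x c1 s ^ 2 + Tl x c2 s ^ 2 + Tl x c3 s ^ 2 = 1.
Proof.
  intros H Hs. destruct H as [_ [_ [Hn _]]]. specialize (Hn s Hs). unfold mnorm in Hn.
  apply exp_inv in Hn. unfold Tl, lg.
  set (y := ln (c1 (vmder x s)) ^ 2 + ln (c2 (vmder x s)) ^ 2 + ln (c3 (vmder x s)) ^ 2) in *.
  assert (0 <= y) by (unfold y; nra).
  rewrite <- (sqrt_sqrt y); auto. rewrite Hn; ring.
Qed.

Lemma F1 I x p s : Hyp I x -> P3 p -> I s -> s * Derive (Tl x p) s = Kf x s * Nl x p s.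
Proof.
  intros H HP Hs. rewrite <- (R_Al I); auto. rewrite E_N; auto. field.
  apply Rgt_not_eq, (K_pos I); auto.
Qed.

Lemma F2 I x s : Hyp I x -> I s -> Nl x c1 s ^ 2 + Nl x c2 s ^ 2 + Nl x c3 s ^ 2 = 1.
Proof.
  intros H Hs. rewrite !E_N; auto. pose proof (K_pos I x s H Hs) as Hk.
  pose proof (sumA_pos I x s H Hs) as Hp. pose proof (E_K x s) as HK.
  assert (Kf x s ^ 2 = Al x c1 s ^ 2 + Al x c2 s ^ 2 + Al x c3 s ^ 2).
  { rewrite HK. rewrite <- Rsqr_pow2. apply Rsqr_sqrt. lra. }
  field_simplify. 2: lra. rewrite <- H0. field. lra.
Qed.

Lemma F3 I x s : Hyp I x -> I s -> Tl x c1 s * Nl x c1 s + Tl x c2 s * Nl x c2 s + Tl x c3 s * Nl x c3 s = 0.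
Proof.
  intros H Hs. pose proof (Hyp_open _ _ H) as HI.
  assert (Hd : is_derive (fun u => Tl x c1 u ^ 2 + Tl x c2 u ^ 2 + Tl x c3 u ^ 2) s
    (2 * (Tl x c1 s * Derive (Tl x c1) s + Tl x c2 s * Derive (Tl x c2) s + Tl x c3 s * Derive (Tl x c3) s))).
  { auto_derive. exd HI H Hs. etared; ring. }
  pose proof (deriv_zero I _ 1 s _ HI (fun u Hu => F0 I x u H Hu) Hs Hd) as Z.
  pose proof (F1 I x c1 s H P31 Hs). pose proof (F1 I x c2 s H P32 Hs). pose proof (F1 I x c3 s H P33 Hs).
  pose proof (K_pos I x s H Hs).
  assert (E : Kf x s * (Tl x c1 s * Nl x c1 s + Tl x c2 s * Nl x c2 s + Tl x c3 s * Nl x c3 s) =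
     s * (Tl x c1 s * Derive (Tl x c1) s + Tl x c2 s * Derive (Tl x c2) s + Tl x c3 s * Derive (Tl x c3) s)).
  { rewrite Rmult_plus_distr_l, Rmult_plus_distr_l.
    replace (Kf x s * (Tl x c1 s * Nl x c1 s)) with (Tl x c1 s * (Kf x s * Nl x c1 s)) by ring.
    replace (Kf x s * (Tl x c2 s * Nl x c2 s)) with (Tl x c2 s * (Kf x s * Nl x c2 s)) by ring.
    replace (Kf x s * (Tl x c3 s * Nl x c3 s)) with (Tl x c3 s * (Kf x s * Nl x c3 s)) by ring.
    rewrite <- H0, <- H1, <- H2. ring. }
  assert (Hz : Tl x c1 s * Derive (Tl x c1) s + Tl x c2 s * Derive (Tl x c2) s + Tl x c3 s * Derive (Tl x c3) s = 0) by lra.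
  rewrite Hz, Rmult_0_r in E.
  apply Rmult_integral in E. destruct E; [lra|auto].
Qed.

Lemma F4 I x s : Hyp I x -> I s -> Nl x c1 s * Dl x c1 s + Nl x c2 s * Dl x c2 s + Nl x c3 s * Dl x c3 s = 0.
Proof.
  intros H Hs. pose proof (Hyp_open _ _ H) as HI.
  assert (Hd : is_derive (fun u => Nl x c1 u ^ 2 + Nl x c2 u ^ 2 + Nl x c3 u ^ 2) s
    (2 * (Nl x c1 s * Derive (Nl x c1) s + Nl x c2 s * Derive (Nl x c2) s + Nl x c3 s * Derive (Nl x c3) s))).
  { auto_derive. exd HI H Hs. etared; ring. }
  pose proof (deriv_zero I _ 1 s _ HI (fun u Hu => F2 I x u H Hu) Hs Hd) as Z.
  rewrite (R_Dl I x c1), (R_Dl I x c2), (R_Dl I x c3); auto.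
  assert (Hz : Nl x c1 s * Derive (Nl x c1) s + Nl x c2 s * Derive (Nl x c2) s + Nl x c3 s * Derive (Nl x c3) s = 0) by lra.
  transitivity (s * (Nl x c1 s * Derive (Nl x c1) s + Nl x c2 s * Derive (Nl x c2) s + Nl x c3 s * Derive (Nl x c3) s)).
  ring. rewrite Hz; ring.
Qed.

Lemma F5 I x s : Hyp I x -> I s -> Tl x c1 s * Dl x c1 s + Tl x c2 s * Dl x c2 s + Tl x c3 s * Dl x c3 s = - Kf x s.
Proof.
  intros H Hs. pose proof (Hyp_open _ _ H) as HI.
  assert (Hd : is_derive (fun u => Tl x c1 u * Nl x c1 u + Tl x c2 u * Nl x c2 u + Tl x c3 u * Nl x c3 u) s
    (Derive (Tl x c1) s * Nl x c1 s + Tl x c1 s * Derive (Nl x c1) s +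
     (Derive (Tl x c2) s * Nl x c2 s + Tl x c2 s * Derive (Nl x c2) s) +
     (Derive (Tl x c3) s * Nl x c3 s + Tl x c3 s * Derive (Nl x c3) s))).
  { auto_derive. exd HI H Hs. etared; ring. }
  pose proof (deriv_zero I _ 0 s _ HI (fun u Hu => F3 I x u H Hu) Hs Hd) as Z.
  rewrite (R_Dl I x c1), (R_Dl I x c2), (R_Dl I x c3); auto.
  pose proof (F1 I x c1 s H P31 Hs). pose proof (F1 I x c2 s H P32 Hs). pose proof (F1 I x c3 s H P33 Hs).
  pose proof (F2 I x s H Hs).
  transitivity (s * (Derive (Tl x c1) s * Nl x c1 s + Tl x c1 s * Derive (Nl x c1) s +
     (Derive (Tl x c2) s * Nl x c2 s + Tl x c2 s * Derive (Nl x c2) s) +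
     (Derive (Tl x c3) s * Nl x c3 s + Tl x c3 s * Derive (Nl x c3) s)) -
     (Nl x c1 s * (s * Derive (Tl x c1) s) + Nl x c2 s * (s * Derive (Tl x c2) s) + Nl x c3 s * (s * Derive (Tl x c3) s))).
  ring. rewrite Z, H0, H1, H2.
  transitivity (- Kf x s * (Nl x c1 s ^ 2 + Nl x c2 s ^ 2 + Nl x c3 s ^ 2)); [ring| rewrite H3; ring].
Qed.

Lemma orthoT I x s : Hyp I x -> I s ->
  Tl x c1 s * Tl x c1 s + Tl x c2 s * Tl x c2 s + Tl x c3 s * Tl x c3 s = 1 /\
  Nl x c1 s * Nl x c1 s + Nl x c2 s * Nl x c2 s + Nl x c3 s * Nl x c3 s = 1 /\
  Tl x c1 s * Nl x c1 s + Tl x c2 s * Nl x c2 s + Tl x c3 s * Nl x c3 s = 0.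
Proof.
  intros H Hs. pose proof (F0 I x s H Hs). pose proof (F2 I x s H Hs). pose proof (F3 I x s H Hs).
  split; [|split]; [rewrite <- H0; ring | rewrite <- H1; ring | exact H2].
Qed.

Lemma F7 I x s : Hyp I x -> I s ->
  Dl x c1 s = - Kf x s * Tl x c1 s + Tau x s * Bl x c1 s /\
  Dl x c2 s = - Kf x s * Tl x c2 s + Tau x s * Bl x c2 s /\
  Dl x c3 s = - Kf x s * Tl x c3 s + Tau x s * Bl x c3 s.
Proof.
  intros H Hs. destruct (orthoT I x s H Hs) as [HT [HN HTN]].
  pose proof (decomp _ _ _ _ _ _ (Dl x c1 s) (Dl x c2 s) (Dl x c3 s) HT HN HTN) as D. simpl in D.
  pose proof (F4 I x s H Hs) as H4. pose proof (F5 I x s H Hs) as H5. pose proof (E_Tau x s) as Ht.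
  rewrite E_B1, E_B2, E_B3 in Ht |- *.
  assert (E1 : Dl x c1 s * Tl x c1 s + Dl x c2 s * Tl x c2 s + Dl x c3 s * Tl x c3 s = - Kf x s) by (rewrite <- H5; ring).
  assert (E2 : Dl x c1 s * Nl x c1 s + Dl x c2 s * Nl x c2 s + Dl x c3 s * Nl x c3 s = 0) by (rewrite <- H4; ring).
  rewrite E1, E2, <- Ht in D. destruct D as [D1 [D2 D3]].
  split; [|split]; [rewrite D1 at 1 | rewrite D2 at 1 | rewrite D3 at 1]; ring.
Qed.

Lemma crossTD (T1 T2 T3 N1 N2 N3 K tau : R) :
  T1*T1+T2*T2+T3*T3 = 1 -> T1*N1+T2*N2+T3*N3 = 0 ->
  let B1 := T2*N3 - T3*N2 in let B2 := T3*N1 - T1*N3 in let B3 := T1*N2 - T2*N1 in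
  let D1 := -K*T1 + tau*B1 in let D2 := -K*T2 + tau*B2 in let D3 := -K*T3 + tau*B3 in
  (K*N2*N3 + T2*D3 - (K*N3*N2 + T3*D2) = - tau * N1) /\
  (K*N3*N1 + T3*D1 - (K*N1*N3 + T1*D3) = - tau * N2) /\
  (K*N1*N2 + T1*D2 - (K*N2*N1 + T2*D1) = - tau * N3).
Proof.
  intros HT HTN B1 B2 B3 D1 D2 D3.
  assert (E1 : K*N2*N3 + T2*D3 - (K*N3*N2 + T3*D2) = tau*(T1*(T1*N1+T2*N2+T3*N3) - N1*(T1*T1+T2*T2+T3*T3))) by (unfold D1,D2,D3,B1,B2,B3; ring).
  assert (E2 : K*N3*N1 + T3*D1 - (K*N1*N3 + T1*D3) = tau*(T2*(T1*N1+T2*N2+T3*N3) - N2*(T1*T1+T2*T2+T3*T3))) by (unfold D1,D2,D3,B1,B2,B3; ring).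
  assert (E3 : K*N1*N2 + T1*D2 - (K*N2*N1 + T2*D1) = tau*(T3*(T1*N1+T2*N2+T3*N3) - N3*(T1*T1+T2*T2+T3*T3))) by (unfold D1,D2,D3,B1,B2,B3; ring).
  rewrite HT, HTN in *. split; [|split]; [rewrite E1|rewrite E2|rewrite E3]; ring.
Qed.

Lemma F8 I x s : Hyp I x -> I s ->
  s * Derive (Bl x c1) s = - Tau x s * Nl x c1 s /\
  s * Derive (Bl x c2) s = - Tau x s * Nl x c2 s /\
  s * Derive (Bl x c3) s = - Tau x s * Nl x c3 s.
Proof.
  intros H Hs. pose proof (Hyp_open _ _ H) as HI.
  destruct (orthoT I x s H Hs) as [HT [HN HTN]].
  destruct (F7 I x s H Hs) as [D1 [D2 D3]]. rewrite E_B1 in D1. rewrite E_B2 in D2. rewrite E_B3 in D3.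
  pose proof (crossTD _ _ _ _ _ _ (Kf x s) (Tau x s) HT HTN) as C. simpl in C.
  rewrite <- D1, <- D2, <- D3 in C. destruct C as [C1 [C2 C3]].
  repeat (rewrite (R_Dl I x c1) in * by auto); repeat (rewrite (R_Dl I x c2) in * by auto);
  repeat (rewrite (R_Dl I x c3) in * by auto).
  repeat (rewrite <- (F1 I x c1) in * by auto); repeat (rewrite <- (F1 I x c2) in * by auto);
  repeat (rewrite <- (F1 I x c3) in * by auto).
  rewrite (Derive_ext _ _ s (E_B1 x)), (Derive_ext _ _ s (E_B2 x)), (Derive_ext _ _ s (E_B3 x)).
  split; [|split]; [rewrite <- C1 | rewrite <- C2 | rewrite <- C3];
  rewrite Derive_minus, !Derive_mult; try (etared; ring); exd HI H Hs;
  (apply (ex_derive_mult (Tl x _) (Nl x _))); exd HI H Hs.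
Qed.

Lemma const_on I f s1 s2 : open_interval_pos I ->
  (forall s, I s -> ex_derive f s /\ Derive f s = 0) -> I s1 -> I s2 -> f s1 = f s2.
Proof.
  intros HI Hd H1 H2. destruct HI as [_ [Hint _]].
  assert (Hin : forall y, Rmin s1 s2 <= y <= Rmax s1 s2 -> I y).
  { intros y Hy. unfold Rmin, Rmax in Hy. destruct (Rle_dec s1 s2).
    apply (Hint s1 y s2); auto. apply (Hint s2 y s1); auto. }
  destruct (MVT_gen f s1 s2 (fun _ => 0)) as [c [_ Hc]].
  - intros y Hy. destruct (Hd y) as [He Hz]. apply Hin; lra. rewrite <- Hz. apply Derive_correct, He.
  - intros y Hy. apply continuity_pt_filterlim. apply (ex_derive_continuous (K:=R_AbsRing) (V:=R_NormedModule) f). apply Hd, Hin, Hy.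
  - lra.
Qed.

Definition av x (V1 V2 V3 : R) u := Tl x c1 u * V1 + Tl x c2 u * V2 + Tl x c3 u * V3.
Definition cv x (V1 V2 V3 : R) u := Nl x c1 u * V1 + Nl x c2 u * V2 + Nl x c3 u * V3.
Definition bv x (V1 V2 V3 : R) u := Bl x c1 u * V1 + Bl x c2 u * V2 + Bl x c3 u * V3.

Lemma Vder I x V1 V2 V3 s : Hyp I x -> I s ->
  s * Derive (av x V1 V2 V3) s = Kf x s * cv x V1 V2 V3 s /\
  s * Derive (cv x V1 V2 V3) s = - Kf x s * av x V1 V2 V3 s + Tau x s * bv x V1 V2 V3 s /\
  s * Derive (bv x V1 V2 V3) s = - Tau x s * cv x V1 V2 V3 s.
Proof.
  intros H Hs. pose proof (Hyp_open _ _ H) as HI.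
  destruct (F7 I x s H Hs) as [D1 [D2 D3]]. destruct (F8 I x s H Hs) as [B1 [B2 B3]].
  pose proof (F1 I x c1 s H P31 Hs). pose proof (F1 I x c2 s H P32 Hs). pose proof (F1 I x c3 s H P33 Hs).
  rewrite (R_Dl I x c1) in D1 by auto. rewrite (R_Dl I x c2) in D2 by auto. rewrite (R_Dl I x c3) in D3 by auto.
  unfold av, cv, bv.
  split; [|split].
  - rewrite (is_derive_unique _ _ (Derive (Tl x c1) s * V1 + Derive (Tl x c2) s * V2 + Derive (Tl x c3) s * V3)).
    2: { auto_derive. exd HI H Hs. etared; ring. }
    transitivity ((s * Derive (Tl x c1) s) * V1 + (s * Derive (Tl x c2) s) * V2 + (s * Derive (Tl x c3) s) * V3). ring.
    rewrite H0, H1, H2. ring.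
  - rewrite (is_derive_unique _ _ (Derive (Nl x c1) s * V1 + Derive (Nl x c2) s * V2 + Derive (Nl x c3) s * V3)).
    2: { auto_derive. exd HI H Hs. etared; ring. }
    transitivity ((s * Derive (Nl x c1) s) * V1 + (s * Derive (Nl x c2) s) * V2 + (s * Derive (Nl x c3) s) * V3). ring.
    rewrite D1, D2, D3. ring.
  - rewrite (is_derive_unique _ _ (Derive (Bl x c1) s * V1 + Derive (Bl x c2) s * V2 + Derive (Bl x c3) s * V3)).
    2: { auto_derive. exd HI H Hs. etared; ring. }
    transitivity ((s * Derive (Bl x c1) s) * V1 + (s * Derive (Bl x c2) s) * V2 + (s * Derive (Bl x c3) s) * V3). ring.
    rewrite B1, B2, B3. ring.
Qed.

Lemma Vdec I x V1 V2 V3 s : Hyp I x -> I s ->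
  V1 = av x V1 V2 V3 s * Tl x c1 s + cv x V1 V2 V3 s * Nl x c1 s + bv x V1 V2 V3 s * Bl x c1 s /\
  V2 = av x V1 V2 V3 s * Tl x c2 s + cv x V1 V2 V3 s * Nl x c2 s + bv x V1 V2 V3 s * Bl x c2 s /\
  V3 = av x V1 V2 V3 s * Tl x c3 s + cv x V1 V2 V3 s * Nl x c3 s + bv x V1 V2 V3 s * Bl x c3 s.
Proof.
  intros H Hs. destruct (orthoT I x s H Hs) as [HT [HN HTN]].
  pose proof (decomp _ _ _ _ _ _ V1 V2 V3 HT HN HTN) as D. simpl in D.
  unfold av, cv, bv. rewrite E_B1, E_B2, E_B3. destruct D as [d1 [d2 d3]].
  split; [|split]; [rewrite d1 at 1|rewrite d2 at 1|rewrite d3 at 1]; ring.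
Qed.

Lemma sig_log I x s : Hyp I x -> I s ->
  ln (msigma x s) = (Kf x s * (s * Derive (Tau x) s) - Tau x s * (s * Derive (Kf x) s)) /
     ((Kf x s ^ 2 + Tau x s ^ 2) * sqrt (Kf x s ^ 2 + Tau x s ^ 2)).
Proof.
  intros H Hs. pose proof (Hyp_open _ _ H) as HI. pose proof (K_pos I x s H Hs) as Hk.
  assert (exK : ex_derive (Kf x) s) by (apply (Sm_ex I); [apply Sm_K; auto|auto]).
  assert (exT : ex_derive (Tau x) s) by (apply (Sm_ex I); [apply Sm_Tau; auto|auto]).
  set (W := Kf x s ^ 2 + Tau x s ^ 2).
  assert (HW : 0 < W) by (unfold W; pose proof (pow_lt _ 2 Hk); pose proof (pow2_ge_0 (Tau x s)); lra).
  unfold msigma, mmul, mdivs, msq, mpowR, madd, mder. rewrite ln_exp.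
  rewrite !ln_exp. rewrite <- exp_plus, ln_exp.
  change (ln (mcurv x s)) with (Kf x s). change (ln (mtors x s)) with (Tau x s).
  change (fun u => exp (ln (mtors x u) / ln (mcurv x u))) with (fun u => exp ((fun v => Tau x v / Kf x v) u)).
  rewrite Derive_expc. 2: { apply (ex_derive_div (Tau x) (Kf x)); auto. lra. }
  rewrite Derive_div; auto. 2: lra.
  fold W.
  replace (Rpower W (3 / 2)) with (W * sqrt W).
  2: { replace (3/2) with (1 + /2) by field. rewrite Rpower_plus, Rpower_1, Rpower_sqrt; auto. }
  assert (0 < sqrt W) by (apply sqrt_lt_R0; auto).
  field. pose proof (exp_pos (Tau x s / Kf x s)). repeat split; lra.
Qed.

Lemma W_pos I x s : Hyp I x -> I s -> 0 < Kf x s ^ 2 + Tau x s ^ 2.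
Proof. intros H Hs. pose proof (K_pos I x s H Hs) as Hk. pose proof (pow_lt _ 2 Hk). pose proof (pow2_ge_0 (Tau x s)); lra. Qed.

Lemma der_rs I x f s : Hyp I x -> I s -> ex_derive f s ->
  is_derive (fun u => f u / sqrt (Kf x u ^ 2 + Tau x u ^ 2)) s
   ((Derive f s * (Kf x s ^ 2 + Tau x s ^ 2) - f s * (Kf x s * Derive (Kf x) s + Tau x s * Derive (Tau x) s))
     / ((Kf x s ^ 2 + Tau x s ^ 2) * sqrt (Kf x s ^ 2 + Tau x s ^ 2))).
Proof.
  intros H Hs Hf. pose proof (Hyp_open _ _ H) as HI. pose proof (W_pos I x s H Hs) as HW.
  assert (exK : ex_derive (Kf x) s) by (apply (Sm_ex I); [apply Sm_K; auto|auto]).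
  assert (exT : ex_derive (Tau x) s) by (apply (Sm_ex I); [apply Sm_Tau; auto|auto]).
  assert (0 < sqrt (Kf x s ^ 2 + Tau x s ^ 2)) by (apply sqrt_lt_R0; auto).
  auto_derive.
  all: replace (Kf x s * (Kf x s * 1) + Tau x s * (Tau x s * 1)) with (Kf x s ^ 2 + Tau x s ^ 2) by ring.
  - repeat split; auto; lra.
  - etared. set (W := Kf x s ^ 2 + Tau x s ^ 2) in *. rewrite sqrt_sqrt by lra. field. lra.
Qed.
Lemma ortho_expand (T1 T2 T3 N1 N2 N3 a c b : R) :
  T1*T1+T2*T2+T3*T3 = 1 -> N1*N1+N2*N2+N3*N3 = 1 -> T1*N1+T2*N2+T3*N3 = 0 ->
  let B1 := T2*N3 - T3*N2 in let B2 := T3*N1 - T1*N3 in let B3 := T1*N2 - T2*N1 in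
  let V1 := a*T1 + c*N1 + b*B1 in let V2 := a*T2 + c*N2 + b*B2 in let V3 := a*T3 + c*N3 + b*B3 in
  V1*V1 + V2*V2 + V3*V3 = a*a + c*c + b*b /\ N1*V1 + N2*V2 + N3*V3 = c.
Proof.
  intros HT HN HTN B1 B2 B3 V1 V2 V3.
  assert (E1 : V1*V1 + V2*V2 + V3*V3 = a*a*(T1*T1+T2*T2+T3*T3) + c*c*(N1*N1+N2*N2+N3*N3)
     + b*b*((T1*T1+T2*T2+T3*T3)*(N1*N1+N2*N2+N3*N3) - (T1*N1+T2*N2+T3*N3)^2) + 2*a*c*(T1*N1+T2*N2+T3*N3))
    by (unfold V1,V2,V3,B1,B2,B3; ring).
  assert (E2 : N1*V1 + N2*V2 + N3*V3 = a*(T1*N1+T2*N2+T3*N3) + c*(N1*N1+N2*N2+N3*N3)) by (unfold V1,V2,V3,B1,B2,B3; ring).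
  rewrite HT, HN, HTN in *. split; [rewrite E1|rewrite E2]; ring.
Qed.

Lemma F7p I x p s : Hyp I x -> P3 p -> I s -> Dl x p s = - Kf x s * Tl x p s + Tau x s * Bl x p s.
Proof. intros H HP Hs. destruct (F7 I x s H Hs) as [A [B C]]. destruct HP as [->|[->| ->]]; assumption. Qed.
Lemma F8p I x p s : Hyp I x -> P3 p -> I s -> s * Derive (Bl x p) s = - Tau x s * Nl x p s.
Proof. intros H HP Hs. destruct (F8 I x s H Hs) as [A [B C]]. destruct HP as [->|[->| ->]]; assumption. Qed.

Lemma c1_mk3 a b c : c1 (mk3 a b c) = a. Proof. reflexivity. Qed.
Lemma c2_mk3 a b c : c2 (mk3 a b c) = b. Proof. reflexivity. Qed.
Lemma c3_mk3 a b c : c3 (mk3 a b c) = c. Proof. reflexivity. Qed.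

Definition rsf x (f : R -> R) u := f u / sqrt (Kf x u ^ 2 + Tau x u ^ 2).

Lemma rsf_der I x f s : Hyp I x -> I s -> ex_derive f s ->
  ex_derive (rsf x f) s /\ Derive (rsf x f) s = 
   ((Derive f s * (Kf x s ^ 2 + Tau x s ^ 2) - f s * (Kf x s * Derive (Kf x) s + Tau x s * Derive (Tau x) s))
     / ((Kf x s ^ 2 + Tau x s ^ 2) * sqrt (Kf x s ^ 2 + Tau x s ^ 2))).
Proof.
  intros H Hs Hf. pose proof (der_rs I x f s H Hs Hf) as D. split.
  eexists; exact D. apply is_derive_unique, D.
Qed.

Lemma sig_rel I x s c0 : Hyp I x -> I s -> msigma x s = c0 ->
  (Kf x s * (s * Derive (Tau x) s) - Tau x s * (s * Derive (Kf x) s)) /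
     ((Kf x s ^ 2 + Tau x s ^ 2) * sqrt (Kf x s ^ 2 + Tau x s ^ 2)) = ln c0.
Proof. intros H Hs E. rewrite <- (sig_log I x s H Hs), E. reflexivity. Qed.

Lemma dir2 I x : Hyp I x -> (exists c, forall s, I s -> msigma x s = c) -> mslant_helix I x.
Proof.
  intros H [c0 Hc]. pose proof (Hyp_open _ _ H) as HI.
  assert (Hoi : open_interval_pos I) by apply H.
  destruct Hoi as [Hpos [_ [_ [s1 Hs1]]]].
  set (sg := ln c0).
  set (r := / sqrt (1 + sg ^ 2)).
  set (cc := sg * r).
  set (af := rsf x (fun u => r * Tau x u)).
  set (bf := rsf x (fun u => r * Kf x u)).
  set (Vf := fun p u => af u * Tl x p u + cc * Nl x p u + bf u * Bl x p u).
  assert (Hder : forall p s, P3 p -> I s -> ex_derive (Vf p) s /\ Derive (Vf p) s = 0).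
  { intros p s HP Hs.
    pose proof (K_pos I x s H Hs) as Hk. pose proof (W_pos I x s H Hs) as HW. pose proof (Hpos s Hs) as Hsp.
    assert (exK : ex_derive (Kf x) s) by (apply (Sm_ex I); [apply Sm_K; auto|auto]).
    assert (exT : ex_derive (Tau x) s) by (apply (Sm_ex I); [apply Sm_Tau; auto|auto]).
    assert (exTl : ex_derive (Tl x p) s) by (apply (Sm_ex I); [apply Sm_Tl; auto|auto]).
    assert (exNl : ex_derive (Nl x p) s) by (apply (Sm_ex I); [apply Sm_Nl; auto|auto]).
    assert (exBl : ex_derive (Bl x p) s) by (apply (Sm_ex I); [apply Sm_Bl; auto|auto]).
    destruct (rsf_der I x (fun u => r * Tau x u) s H Hs) as [exA dA]. apply ex_derive_scal, exT.
    destruct (rsf_der I x (fun u => r * Kf x u) s H Hs) as [exB dB]. apply ex_derive_scal, exK.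
    rewrite Derive_scal in dA, dB.
    assert (exA' : ex_derive af s) by exact exA. assert (exB' : ex_derive bf s) by exact exB.
    assert (dA' : Derive af s = ((r * Derive (Tau x) s * (Kf x s ^ 2 + Tau x s ^ 2) - r * Tau x s * (Kf x s * Derive (Kf x) s + Tau x s * Derive (Tau x) s))
     / ((Kf x s ^ 2 + Tau x s ^ 2) * sqrt (Kf x s ^ 2 + Tau x s ^ 2)))) by exact dA.
    assert (dB' : Derive bf s = ((r * Derive (Kf x) s * (Kf x s ^ 2 + Tau x s ^ 2) - r * Kf x s * (Kf x s * Derive (Kf x) s + Tau x s * Derive (Tau x) s))
     / ((Kf x s ^ 2 + Tau x s ^ 2) * sqrt (Kf x s ^ 2 + Tau x s ^ 2)))) by exact dB.
    clear exA exB dA dB.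
    assert (Hd : is_derive (Vf p) s (Derive af s * Tl x p s + af s * Derive (Tl x p) s + cc * Derive (Nl x p) s
        + (Derive bf s * Bl x p s + bf s * Derive (Bl x p) s))).
    { unfold Vf. auto_derive. repeat split; auto. etared; ring. }
    split. eexists; exact Hd. rewrite (is_derive_unique _ _ _ Hd).
    pose proof (sig_rel I x s c0 H Hs (Hc s Hs)) as Hsg. fold sg in Hsg.
    set (W := Kf x s ^ 2 + Tau x s ^ 2) in *.
    assert (HsW : 0 < sqrt W) by (apply sqrt_lt_R0; auto).
    assert (EA : s * Derive af s = Kf x s * cc).
    { rewrite dA'. unfold cc. rewrite <- Hsg. unfold W in *. field. lra. }
    assert (EB : s * Derive bf s = - Tau x s * cc).
    { rewrite dB'. unfold cc. rewrite <- Hsg. unfold W in *. field. lra. }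
    assert (EAB : af s * Kf x s = bf s * Tau x s) by (unfold af, bf, rsf; unfold W in *; field; lra).
    pose proof (F1 I x p s H HP Hs) as E1. pose proof (R_Dl I x p s H HP Hs) as E2.
    pose proof (F7p I x p s H HP Hs) as E3. pose proof (F8p I x p s H HP Hs) as E4.
    apply (Rmult_eq_reg_l s); [|lra]. rewrite Rmult_0_r.
    transitivity ((s * Derive af s) * Tl x p s + af s * (s * Derive (Tl x p) s) + cc * (s * Derive (Nl x p) s)
        + ((s * Derive bf s) * Bl x p s + bf s * (s * Derive (Bl x p) s))). ring.
    rewrite EA, EB, E1, <- E2, E3, E4.
    transitivity ((af s * Kf x s - bf s * Tau x s) * Nl x p s). ring. rewrite EAB. ring. }
  assert (Hconst : forall p s, P3 p -> I s -> Vf p s = Vf p s1).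
  { intros p s HP Hs. apply (const_on I); [apply H| intros u Hu; apply Hder; auto | exact Hs | exact Hs1]. }
  destruct (orthoT I x s1 H Hs1) as [HT1 [HN1 HTN1]].
  destruct (ortho_expand _ _ _ _ _ _ (af s1) cc (bf s1) HT1 HN1 HTN1) as [Hn _].
  simpl in Hn. rewrite <- !E_B1, <- !E_B2, <- !E_B3 in Hn.
  exists (mk3 (exp (Vf c1 s1)) (exp (Vf c2 s1)) (exp (Vf c3 s1))).
  split; [|split].
  - unfold vpos, mk3, Defs.c1, Defs.c2, Defs.c3; simpl. repeat split; apply exp_pos.
  - unfold mnorm. rewrite !c1_mk3, !c2_mk3, !c3_mk3, !ln_exp. f_equal.
    pose proof (W_pos I x s1 H Hs1) as HW.
    assert (Hab : af s1 * af s1 + bf s1 * bf s1 = r * r).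
    { unfold af, bf, rsf.
      replace (r * Tau x s1 / sqrt (Kf x s1 ^ 2 + Tau x s1 ^ 2) * (r * Tau x s1 / sqrt (Kf x s1 ^ 2 + Tau x s1 ^ 2)) +
        r * Kf x s1 / sqrt (Kf x s1 ^ 2 + Tau x s1 ^ 2) * (r * Kf x s1 / sqrt (Kf x s1 ^ 2 + Tau x s1 ^ 2)))
       with ((r * r) * (Kf x s1 ^ 2 + Tau x s1 ^ 2) / (sqrt (Kf x s1 ^ 2 + Tau x s1 ^ 2) * sqrt (Kf x s1 ^ 2 + Tau x s1 ^ 2))).
      rewrite sqrt_sqrt by lra. field. lra.
      assert (0 < sqrt (Kf x s1 ^ 2 + Tau x s1 ^ 2)) by (apply sqrt_lt_R0; lra). field. lra. }
    assert (Hrc : r * r + cc * cc = 1).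
    { unfold cc, r. assert (0 < 1 + sg ^ 2) by (pose proof (pow2_ge_0 sg); lra).
      assert (0 < sqrt (1 + sg ^ 2)) by (apply sqrt_lt_R0; lra).
      replace (/ sqrt (1 + sg ^ 2) * / sqrt (1 + sg ^ 2) + sg * / sqrt (1 + sg ^ 2) * (sg * / sqrt (1 + sg ^ 2)))
        with ((1 + sg ^ 2) / (sqrt (1 + sg ^ 2) * sqrt (1 + sg ^ 2))) by (field; lra).
      rewrite sqrt_sqrt by lra. field. lra. }
    replace (Vf c1 s1 ^ 2 + Vf c2 s1 ^ 2 + Vf c3 s1 ^ 2) with 1. apply sqrt_1.
    unfold Vf. simpl. rewrite !Rmult_1_r. rewrite Hn. lra.
  - exists (exp cc). intros s Hs. unfold minner. rewrite !c1_mk3, !c2_mk3, !c3_mk3, !ln_exp. f_equal.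
    change (Nl x c1 s * Vf c1 s1 + Nl x c2 s * Vf c2 s1 + Nl x c3 s * Vf c3 s1 = cc).
    rewrite <- (Hconst c1 s), <- (Hconst c2 s), <- (Hconst c3 s); auto.
    destruct (orthoT I x s H Hs) as [HT [HN HTN]].
    destruct (ortho_expand _ _ _ _ _ _ (af s) cc (bf s) HT HN HTN) as [_ Hc2].
    simpl in Hc2. rewrite <- !E_B1, <- !E_B2, <- !E_B3 in Hc2. exact Hc2.
Qed.


Lemma dir1 I x : Hyp I x -> mslant_helix I x -> exists c, forall s, I s -> msigma x s = c.
Proof.
  intros H [v [Hvp [Hvn [c0 Hc]]]]. pose proof (Hyp_open _ _ H) as HI.
  assert (Hoi : open_interval_pos I) by apply H.
  destruct Hoi as [Hpos [_ [_ [s1 Hs1]]]].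
  set (V1 := ln (c1 v)). set (V2 := ln (c2 v)). set (V3 := ln (c3 v)).
  assert (HV : V1 * V1 + V2 * V2 + V3 * V3 = 1).
  { unfold mnorm in Hvn. apply exp_inv in Hvn. fold V1 V2 V3 in Hvn.
    assert (0 <= V1 ^ 2 + V2 ^ 2 + V3 ^ 2) by nra.
    replace (V1 * V1 + V2 * V2 + V3 * V3) with (V1 ^ 2 + V2 ^ 2 + V3 ^ 2) by ring.
    rewrite <- (sqrt_sqrt (V1 ^ 2 + V2 ^ 2 + V3 ^ 2)); auto. rewrite Hvn; ring. }
  set (cc := ln c0).
  set (a := av x V1 V2 V3). set (b := bv x V1 V2 V3).
  assert (Hcv : forall s, I s -> cv x V1 V2 V3 s = cc).
  { intros s Hs. unfold cc. rewrite <- (Hc s Hs). unfold minner. rewrite ln_exp. reflexivity. }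
  assert (Hloc : forall s, I s -> Kf x s * a s = Tau x s * b s /\ a s * a s + b s * b s + cc * cc = 1 /\
       s * Derive a s = Kf x s * cc /\ s * Derive b s = - Tau x s * cc).
  { intros s Hs. destruct (Vder I x V1 V2 V3 s H Hs) as [Da [Dc Db]].
    rewrite (locconst_D I _ cc s HI Hcv Hs), Rmult_0_r in Dc. rewrite Hcv in Da, Db by auto. fold a b in Da, Dc, Db.
    split; [lra|]. split; [|split; assumption].
    destruct (Vdec I x V1 V2 V3 s H Hs) as [d1 [d2 d3]]. rewrite Hcv in d1, d2, d3 by auto.
    rewrite <- HV.
    transitivity (V1 * (a s * Tl x c1 s + cc * Nl x c1 s + b s * Bl x c1 s) +
                  V2 * (a s * Tl x c2 s + cc * Nl x c2 s + b s * Bl x c2 s) +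
                  V3 * (a s * Tl x c3 s + cc * Nl x c3 s + b s * Bl x c3 s)).
    - rewrite <- (Hcv s Hs). unfold a, b, av, bv, cv. ring.
    - fold a b in d1, d2, d3. rewrite <- d1, <- d2, <- d3. ring. }
  assert (Hcc : cc * cc < 1).
  { destruct (Rlt_or_le (cc * cc) 1) as [h|h]; auto. exfalso.
    assert (Ha0 : forall u, I u -> a u = 0).
    { intros u Hu. destruct (Hloc u Hu) as [_ [E _]]. nra. }
    destruct (Hloc s1 Hs1) as [_ [_ [Da _]]].
    rewrite (locconst_D I a 0 s1 HI Ha0 Hs1), Rmult_0_r in Da.
    pose proof (K_pos I x s1 H Hs1). assert (cc = 0) by nra. subst cc. nra. }
  set (uf := fun u => a u * Tau x u + b u * Kf x u).
  set (q := rsf x uf).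
  assert (Hexab : forall s, I s -> ex_derive a s /\ ex_derive b s /\ ex_derive (Kf x) s /\ ex_derive (Tau x) s).
  { intros s Hs. split; [|split]; [unfold a, av | unfold b, bv |].
    - apply (ex_derive_plus (fun u => Tl x c1 u * V1 + Tl x c2 u * V2)); [apply (ex_derive_plus (fun u => Tl x c1 u * V1))|];
      apply (ex_derive_mult (Tl x _) (fun _ => _)); try apply ex_derive_const; exd HI H Hs.
    - apply (ex_derive_plus (fun u => Bl x c1 u * V1 + Bl x c2 u * V2)); [apply (ex_derive_plus (fun u => Bl x c1 u * V1))|];
      apply (ex_derive_mult (Bl x _) (fun _ => _)); try apply ex_derive_const; exd HI H Hs.
    - split; exd HI H Hs. }
  assert (Hduf : forall s, I s -> ex_derive uf s /\ Derive uf s = Derive a s * Tau x s + a s * Derive (Tau x) s + (Derive b s * Kf x s + b s * Derive (Kf x) s)).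
  { intros s Hs. destruct (Hexab s Hs) as [ea [eb [eK eT]]].
    assert (Hd : is_derive uf s (Derive a s * Tau x s + a s * Derive (Tau x) s + (Derive b s * Kf x s + b s * Derive (Kf x) s))).
    { unfold uf. auto_derive. repeat split; auto. etared; ring. }
    split. eexists; exact Hd. apply is_derive_unique, Hd. }
  assert (Hq : forall s, I s -> ex_derive q s /\ Derive q s = 0).
  { intros s Hs. destruct (Hduf s Hs) as [exu du].
    destruct (rsf_der I x uf s H Hs exu) as [exq dq]. split; [exact exq|].
    pose proof (K_pos I x s H Hs) as Hk. pose proof (W_pos I x s H Hs) as HW. pose proof (Hpos s Hs) as Hsp.
    destruct (Hloc s Hs) as [Hab [_ [Da Db]]].
    assert (0 < sqrt (Kf x s ^ 2 + Tau x s ^ 2)) by (apply sqrt_lt_R0; lra).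
    assert (Da' : Derive a s = Kf x s * cc / s) by (rewrite <- Da; field; lra).
    assert (Db' : Derive b s = - Tau x s * cc / s) by (rewrite <- Db; field; lra).
    assert (Ha' : a s = Tau x s * b s / Kf x s) by (rewrite <- Hab; field; lra).
    unfold q. rewrite dq, du, Da', Db'. unfold uf; cbv beta. rewrite Ha'. field. split; lra. }
  assert (Hqc : forall s, I s -> q s = q s1).
  { intros s Hs. apply (const_on I); [apply H | exact Hq | exact Hs | exact Hs1]. }
  exists (exp (cc / q s1)). intros s Hs.
  rewrite <- (exp_ln (msigma x s)) by (unfold msigma, mmul; apply exp_pos). f_equal.
  rewrite (sig_log I x s H Hs), <- (Hqc s Hs).
  pose proof (K_pos I x s H Hs) as Hk. pose proof (W_pos I x s H Hs) as HW. pose proof (Hpos s Hs) as Hsp.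
  destruct (Hloc s Hs) as [Hab [Hn [Da Db]]]. destruct (Hexab s Hs) as [ea [eb [eK eT]]].
  assert (Da' : Derive a s = Kf x s * cc / s) by (rewrite <- Da; field; lra).
  assert (Db' : Derive b s = - Tau x s * cc / s) by (rewrite <- Db; field; lra).
  assert (Hg : is_derive (fun u => Kf x u * a u - Tau x u * b u) s
     (Derive (Kf x) s * a s + Kf x s * Derive a s - (Derive (Tau x) s * b s + Tau x s * Derive b s))).
  { auto_derive. repeat split; auto. etared; ring. }
  assert (Hz : forall u, I u -> Kf x u * a u - Tau x u * b u = 0).
  { intros u Hu. rewrite (proj1 (Hloc u Hu)). ring. }
  pose proof (deriv_zero I _ 0 s _ HI Hz Hs Hg) as Hg0.
  rewrite Da', Db' in Hg0.
  set (X := s * Derive (Tau x) s). set (Y := s * Derive (Kf x) s).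
  set (W := Kf x s ^ 2 + Tau x s ^ 2) in *.
  assert (Hrel : b s * X - a s * Y = cc * W).
  { unfold X, Y, W. apply (Rmult_eq_reg_l (/ s)). 2: apply Rinv_neq_0_compat; lra.
    transitivity (- (Derive (Kf x) s * a s + Kf x s * (Kf x s * cc / s) - (Derive (Tau x) s * b s + Tau x s * (- Tau x s * cc / s)))
       + cc * (Kf x s ^ 2 + Tau x s ^ 2) / s). field. lra. rewrite Hg0. field. lra. }
  assert (Ha' : a s = Tau x s * b s / Kf x s) by (rewrite <- Hab; field; lra).
  assert (Hu : uf s * (Kf x s * X - Tau x s * Y) = W * W * cc).
  { transitivity (W * (b s * X - a s * Y)). 2: rewrite Hrel; ring. unfold uf; cbv beta. rewrite Ha'. unfold W. field. lra. }
  assert (Hu2 : uf s * uf s = (1 - cc * cc) * W).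
  { unfold uf; cbv beta. replace (1 - cc * cc) with (a s * a s + b s * b s) by lra.
    transitivity ((a s * a s + b s * b s) * W - (Kf x s * a s - Tau x s * b s) ^ 2). unfold W; ring.
    rewrite Hab. ring. }
  assert (Hun : uf s <> 0).
  { intro h. rewrite h in Hu2. assert (0 < (1 - cc * cc) * W) by (apply Rmult_lt_0_compat; lra). lra. }
  assert (HsW : 0 < sqrt W) by (apply sqrt_lt_R0; lra).
  assert (E : Kf x s * X - Tau x s * Y = W * W * cc / uf s) by (rewrite <- Hu; field; auto).
  rewrite E. unfold q, rsf. fold W.
  transitivity (cc * (W / (uf s * sqrt W))). field. repeat split; lra.
  rewrite <- (sqrt_sqrt W) at 1 by lra. field. split; lra.
Qed.
Theorem theorem4p14 (I : R -> Prop) (x : R -> vec3) :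
  open_interval_pos I ->
  smooth_curve_on I x ->
  mnatural I x ->
  (forall s, I s -> 1 < mcurv x s) ->
  (mslant_helix I x <->
   exists c : R, forall s, I s -> msigma x s = c).
Proof.
  intros H1 H2 H3 H4.
  assert (H : Hyp I x) by exact (conj H1 (conj H2 (conj H3 H4))).
  split; [apply dir1 | apply dir2]; exact H.
Qed.
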